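(* Let $(G,k)$ be an instance of \textsc{Paw-free Edge Editing} with $k>0$ such that there is no independent set of $k+3$ vertices of $G$ all having the same neighborhood, and let $S$ be the set of vertices covered by a maximal (under inclusion) collection of pairwise edge-disjoint induced paws in $G$. If a vertex $x\in V(G)$ has at least $4k+6$ neighbors belonging to triangle-free connected components of $G-S$, then there is no solution $A$ of $(G,k)$ such that $x$ belongs to a connected component of $G\Delta A$ that is a complete multipartite graph.
   Context: The paw is the graph on four vertices $x_1,x_2,x_3,x_4$ with edges $x_1x_2,x_2x_3,x_1x_3,x_3x_4$; a graph is paw-free if it has no induced paw. For a set $A$ of unordered vertex pairs, $G\Delta A$ is the graph on $V(G)$ with edge set the symmetric difference of $E(G)$ and $A$. A solution of $(G,k)$ is a set $A$ of at most $k$ vertex pairs such that $G\Delta A$ is paw-free. A complete multipartite graph here means one with at least three nonempty parts (independent sets) and all edges between different parts. Neighborhoods are open neighborhoods. *)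

(* Defs.v *)
From mathcomp Require Import all_boot.
Set Implicit Arguments. Unset Strict Implicit. Unset Printing Implicit Defensive.

Section Defs.
Variable T : finType.

Definition simple_graph (g : rel T) := symmetric g /\ irreflexive g.

Definition nbhd (g : rel T) (v : T) : {set T} := [set w | g v w].

Definition independent (g : rel T) (I : {set T}) :=
  forall u v, u \in I -> v \in I -> ~~ g u v.

Definition induced_paw (g : rel T) (a b c d : T) :=
  [&& uniq [:: a; b; c; d], g a b, g b c, g a c, g c d, ~~ g a d & ~~ g b d].

Definition paw_free (g : rel T) := forall a b c d, ~~ induced_paw g a b c d.

(* vertex sets of induced paws (an induced paw is determined by its vertex set) *)
Definition is_paw_set (g : rel T) (X : {set T}) :=
  [exists a, exists b, exists c, exists d,
     induced_paw g a b c d && (X == [set a; b; c; d])].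

Definition share_edge (g : rel T) (X Y : {set T}) :=
  [exists u, exists v, [&& u \in X :&: Y, v \in X :&: Y & g u v]].

Definition paw_packing (g : rel T) (Q : {set {set T}}) :=
  [forall X in Q, is_paw_set g X] &&
  [forall X in Q, forall Y in Q, (X != Y) ==> ~~ share_edge g X Y].

Definition edit (g : rel T) (A : {set {set T}}) : rel T :=
  fun u v => (u != v) && (g u v (+) ([set u; v] \in A)).

Definition solution (g : rel T) (k : nat) (A : {set {set T}}) :=
  [/\ forall p, p \in A -> #|p| = 2, #|A| <= k & paw_free (edit g A)].

Definition component (g : rel T) (x : T) : {set T} := [set y | connect g x y].

Definition complete_multipartite_on (g : rel T) (C : {set T}) :=
  exists P : {set {set T}},
    [/\ partition P C, 3 <= #|P| &
        forall u v, u \in C -> v \in C -> g u v = (pblock P u != pblock P v)].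

Definition remove (g : rel T) (S : {set T}) : rel T :=
  fun u v => [&& g u v, u \notin S & v \notin S].

Definition triangle_free_on (g : rel T) (C : {set T}) :=
  forall a b c, a \in C -> b \in C -> c \in C -> ~~ [&& g a b, g b c & g a c].

End Defs.

(* Main.v *)
Require Import Defs.
From mathcomp Require Import all_boot.
From mathcomp Require Import zify.

Lemma edit_untouched (T : finType) (g : rel T) (A : {set {set T}}) u w :
  irreflexive g -> u \notin cover A -> edit g A u w = g u w.
Proof.
move=> irr uU; rewrite /edit.
have -> : ([set u; w] \in A) = false.
  apply/negbTE; apply: contra uU => H; apply/bigcupP; exists [set u; w] => //.
  by rewrite !inE eqxx.
case: eqP => [->|_] /=; last by rewrite addbF.
by rewrite irr.
Qed.

Theorem lemma7 (T : finType) (g : rel T) (k : nat) (Q : {set {set T}}) (x : T) :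
  simple_graph g ->
  0 < k ->
  (forall I : {set T}, #|I| = k + 3 -> independent g I ->
     ~ (forall u v, u \in I -> v \in I -> nbhd g u = nbhd g v)) ->
  maxset (paw_packing g) Q ->
  let S := \bigcup_(X in Q) X in
  4 * k + 6 <= #|[set y | [&& g x y, y \notin S &
                    [forall a, forall b, forall c,
                       [&& a \in component (remove g S) y,
                           b \in component (remove g S) y &
                           c \in component (remove g S) y] ==>
                       ~~ [&& remove g S a b, remove g S b c & remove g S a c]]]]| ->
  ~ (exists A : {set {set T}}, solution g k A /\
       complete_multipartite_on (edit g A) (component (edit g A) x)).
Proof.
move=> [gsym girr] _ Hind _ S.
set N := [set y | _] => HN [A [[Asz Ak _] [P [_ _ HP]]]].
set C := component (edit g A) x.
set U := cover A.
have HU : #|U| <= 2 * k.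
  have := leq_card_cover A; move=> /leqifP H.
  have H' : #|U| <= \sum_(p in A) #|p| by case: ifP H => _ H; [rewrite (eqP H)|apply: ltnW].
  have E : \sum_(p in A) #|p| = \sum_(p in A) 2 by apply: eq_bigr => p /Asz.
  rewrite E sum_nat_const in H'; lia.
set N' := N :\: U.
have HN' : 2 * k + 6 <= #|N'|.
  rewrite /N' cardsD.
  have : #|N :&: U| <= #|U| by apply: subset_leq_card; apply: subsetIr.
  lia.
have N'P : forall y, y \in N' -> [/\ y \notin U, g x y, y \notin S, y \in C &
   [forall a, forall b, forall c,
                       [&& a \in component (remove g S) y,
                           b \in component (remove g S) y &
                           c \in component (remove g S) y] ==>
                       ~~ [&& remove g S a b, remove g S b c & remove g S a c]]].
  move=> y; rewrite !inE => /andP[yU /and3P[gxy yS Hf]]; split => //.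
  apply: connect1; rewrite /edit.
  have -> : ([set x; y] \in A) = false.
    apply/negbTE; apply: contra yU => H; apply/bigcupP; exists [set x; y] => //.
    by rewrite !inE eqxx orbT.
  rewrite gxy addbF andbT; apply/eqP => exy; move: gxy; rewrite exy girr.
  done.
have adj : forall u v, u \in N' -> v \in N' -> g u v = (pblock P u != pblock P v).
  move=> u v /N'P[uU _ _ uC _] /N'P[_ _ _ vC _].
  by rewrite -(@edit_untouched _ g A u v girr uU) HP.
have big : forall B : {set T}, B \subset N' -> k + 3 <= #|B| ->
    {in B &, forall u v, pblock P u = pblock P v} -> False.
  move=> B sB cB samB.
  case/card_geqP: cB => s [us ss sub].
  apply: (Hind [set z in s]).
  - by rewrite cardsE (card_uniqP us).
  - move=> u v; rewrite !inE => us' vs'.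
    have uB := sub _ us'; have vB := sub _ vs'.
    by rewrite adj ?(subsetP sB) // (samB u v uB vB) eqxx.
  - move=> u v; rewrite !inE => us' vs'.
    have uB := sub _ us'; have vB := sub _ vs'.
    have /N'P[uU _ _ uC _] := subsetP sB _ uB.
    have /N'P[vU _ _ vC _] := subsetP sB _ vB.
    apply/setP => w; rewrite !inE.
    rewrite -(@edit_untouched _ g A u w girr uU) -(@edit_untouched _ g A v w girr vU).
    case wC : (w \in C).
      by rewrite !HP // (samB u v uB vB).
    have nw : forall z, z \in C -> edit g A z w = false.
      move=> z zC; apply/negP => ezw; move/negP: wC; apply.
      move: zC; rewrite !inE => zC; apply: connect_trans zC (connect1 ezw).
    by rewrite !nw.
have tri : forall y0 y1 y2, y0 \in N' -> y1 \in N' -> y2 \in N' ->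
    pblock P y0 != pblock P y1 -> pblock P y1 != pblock P y2 ->
    pblock P y0 != pblock P y2 -> False.
  move=> y0 y1 y2 h0 h1 h2 d01 d12 d02.
  have g01 : g y0 y1 by rewrite adj.
  have g12 : g y1 y2 by rewrite adj.
  have g02 : g y0 y2 by rewrite adj.
  have /N'P[_ _ s0 _ Hf] := h0.
  have /N'P[_ _ s1 _ _] := h1.
  have /N'P[_ _ s2 _ _] := h2.
  move/forallP: Hf => /(_ y0) /forallP /(_ y1) /forallP /(_ y2) /implyP.
  have r01 : remove g S y0 y1 by rewrite /remove g01 s0 s1.
  have r12 : remove g S y1 y2 by rewrite /remove g12 s1 s2.
  have r02 : remove g S y0 y2 by rewrite /remove g02 s0 s2.
  rewrite !inE connect0 (connect1 r01) (connect1 r02) r01 r12 r02 /=.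
  by move=> /(_ isT).
pose cls (M : {set T}) y := [set z in M | pblock P z == pblock P y].
have clsS : forall M y, cls M y \subset M by move=> M y; apply: subset_predT || (apply/subsetP => z; rewrite inE => /andP[]).
have clsE : forall M y, {in cls M y &, forall u v, pblock P u = pblock P v}.
  by move=> M y u v; rewrite !inE => /andP[_ /eqP->] /andP[_ /eqP->].
have [y0 y0N] : exists y0, y0 \in N' by apply/card_gt0P; lia.
case: (leqP (k + 3) #|cls N' y0|) => c0.
  by apply: (big _ (clsS N' y0) c0 (clsE N' y0)).
set N1 := N' :\: cls N' y0.
have HN1 : k + 4 <= #|N1|.
  rewrite /N1 cardsD (setIidPr (clsS N' y0)); lia.
have [y1 y1N] : exists y1, y1 \in N1 by apply/card_gt0P; lia.
have N1S : N1 \subset N' by apply: subsetDl.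
case: (leqP (k + 3) #|cls N1 y1|) => c1.
  by apply: (big _ (subset_trans (clsS N1 y1) N1S) c1 (clsE N1 y1)).
set N2 := N1 :\: cls N1 y1.
have HN2 : 1 <= #|N2|.
  rewrite /N2 cardsD (setIidPr (clsS N1 y1)); lia.
have [y2 y2N] : exists y2, y2 \in N2 by apply/card_gt0P; lia.
move: (y1N); rewrite /N1 in_setD => /andP[n10 y1N'].
move: (y2N); rewrite /N2 in_setD => /andP[n21 y2N1].
move: (y2N1); rewrite /N1 in_setD => /andP[n20 y2N'].
rewrite /cls in_set y1N' /= in n10.
rewrite /cls in_set y2N' /= in n20.
rewrite /cls in_set y2N1 /= in n21.
apply: (tri y0 y1 y2) => //.
- by rewrite eq_sym.
- by rewrite eq_sym.
- by rewrite eq_sym.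
Qed.
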